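(* For every $p\ge 1$, the joint distribution of the endhered patterns $\pi=12\cdots p$ and $\tau=p\cdots 21$ is symmetric: $a_{n,k,m}(\pi,\tau)=a_{n,k,m}(\tau,\pi)$ for all $n,k,m$. In particular, the number of matchings of size $n$ containing exactly $k$ occurrences of $21$ and exactly $m$ occurrences of $12$ equals the number of matchings of size $n$ containing exactly $m$ occurrences of $21$ and exactly $k$ occurrences of $12$.
   Context: A matching of size $n$ is a set of $n$ arcs $(a,b)$ with $1\le a<b\le 2n$ such that each point of $\{1,\dots,2n\}$ belongs to exactly one arc; $a$ is the starting point and $b$ the ending point. An endhered pattern of size $p$ is identified with a permutation $\pi=\pi_1\dots\pi_p$ of $\{1,\dots,p\}$ (the matching on $\{1,\dots,2p\}$ whose arc ending at $p+t$ starts at $\pi_t$). A matching $\mu$ contains $\pi$ at position $(i+1,j+1)$ (integers $i\ge0$, $j\ge i+p$) if for each $s=1,\dots,p$ the pair $(i+s,\,j+\pi^{-1}(s))$ is an arc of $\mu$. Thus an occurrence of $21$ is a pair of arcs $(i+1,j+2),(i+2,j+1)$ and an occurrence of $12$ is a pair of arcs $(i+1,j+1),(i+2,j+2)$. The number of occurrences of $\pi$ in $\mu$ is the number of positions at which $\mu$ contains $\pi$; $a_{n,k,m}(\pi,\tau)$ is the number of matchings of size $n$ with exactly $k$ occurrences of $\pi$ and exactly $m$ occurrences of $\tau$. *)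

(* Defs.v *)
From mathcomp Require Import all_boot all_fingroup.
Set Implicit Arguments. Unset Strict Implicit. Unset Printing Implicit Defensive.

(* A matching of size n on the points {1,...,2n}, encoded 0-based:
   the point x (1 <= x <= 2n) is represented by the ordinal x-1 : 'I_(2n),
   and mu x is the partner of x. *)
Definition matching_fun (n : nat) := {ffun 'I_(2 * n) -> 'I_(2 * n)}.

Definition is_matching (n : nat) (mu : matching_fun n) : bool :=
  [forall x, (mu (mu x) == x) && (mu x != x)].

Definition arc (n : nat) (mu : matching_fun n) (a b : nat) : bool :=
  [&& 0 < a, a < b, b <= 2 * n &
   [exists x : 'I_(2 * n), (val x == a.-1) && (val (mu x) == b.-1)]].

(* An endhered pattern of size p is a permutation of {1..p}, encoded as a
   permutation of 'I_p (pi_t = val (pi (t-1)) + 1). *)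
Definition pattern (p : nat) := {perm 'I_p}.

(* mu contains pi at position (i+1, j+1), j >= i + p:
   for each s = 1..p, (i + s, j + pi^{-1}(s)) is an arc of mu.
   With s = s'+1, s' : 'I_p, pi^{-1}(s) = val (pi^-1 s') + 1. *)
Definition contains_at (p n : nat) (pi : pattern p) (mu : matching_fun n)
    (i j : nat) : bool :=
  (i + p <= j) &&
  [forall s : 'I_p, arc mu (i + s.+1) (j + (val ((pi^-1)%g s)).+1)].

(* Number of occurrences: number of positions (i+1, j+1).  Any occurrence
   (p >= 1) has i, j <= 2n, so ranging over 'I_(2n+1) loses nothing. *)
Definition occ (p n : nat) (pi : pattern p) (mu : matching_fun n) : nat :=
  #|[set ij : 'I_(2 * n).+1 * 'I_(2 * n).+1 | contains_at pi mu ij.1 ij.2]|.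

Definition a_count (p n k m : nat) (pi tau : pattern p) : nat :=
  #|[set mu : matching_fun n |
      [&& is_matching mu, occ pi mu == k & occ tau mu == m]]|.

Definition inc_pat (p : nat) : pattern p := 1%g.
Definition dec_pat (p : nat) : pattern p := perm (@rev_ord_inj p).

(* Main.v *)
Require Import Defs.
From mathcomp Require Import all_boot all_fingroup.
From mathcomp Require Import zify.
Set Implicit Arguments. Unset Strict Implicit. Unset Printing Implicit Defensive.

Section Refl.
Variable N : nat.
Variable op : nat -> bool.

Fixpoint dn k := match k with 0 => 0 | k'.+1 => if op k' then (dn k').+1 else 0 end.
Fixpoint g z := match z with 0 => 0 | w.+1 => if op (N - w) then (g w).+1 else 0 end.
Definition up k := g (N - k).
Definition r k := if op k then k + up k - dn k else k.

Hypothesis opN : forall k, op k -> k < N.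

Lemma dn_le k : dn k <= k.
Proof. elim: k => //= k IH; case: (op k) => //; lia. Qed.

Lemma upE k : up k = if op k.+1 then (up k.+1).+1 else 0.
Proof.
rewrite /up. case: (ltnP k N) => hk.
- have -> : N - k = (N - k.+1).+1 by lia.
  rewrite [g _.+1]/=. have -> : N - (N - k.+1) = k.+1 by lia. by [].
- have -> : N - k = 0 by lia.
  case E: (op k.+1) => //. have := opN E. lia.
Qed.

Lemma op_up y t : op y -> t <= up y -> op (y + t).
Proof.
elim: t y => [|t IH] y hy ht; first by rewrite addn0.
move: ht; rewrite upE; case E: (op y.+1) => // ht.
rewrite addnS -addSn. by apply: IH.
Qed.

Lemma op_dn y t : op y -> t <= dn y -> op (y - t).
Proof.
elim: t y => [|t IH] y hy ht; first by rewrite subn0.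
case: y hy ht => [|z] hy //= ht.
move: ht; case E: (op z) => // ht.
have -> : z.+1 - t.+1 = z - t by lia.
exact: IH.
Qed.

Lemma r_step x : op x -> op x.+1 -> r x = (r x.+1).+1.
Proof.
move=> h1 h2. rewrite /r h1 h2 (upE x) h2 [dn x.+1]/= h1.
have := dn_le x. lia.
Qed.

Lemma r_refl y t : (forall u, u <= t -> op (y + u)) -> r y = r (y + t) + t.
Proof.
elim: t => [|t IH] h; first by rewrite !addn0.
rewrite IH; last by move=> u hu; apply: h; lia.
have h1 : op (y + t) by apply: h; lia.
have h2 : op (y + t).+1 by rewrite -addnS; apply: h.
have := r_step h1 h2. rewrite -addnS. lia.
Qed.

Lemma r_fix k : ~~ op k -> r k = k.
Proof. by rewrite /r => /negbTE ->. Qed.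

Lemma r_op y : op y -> op (r y).
Proof.
move=> hy; rewrite /r hy.
case: (leqP (dn y) (up y)) => h.
- have -> : y + up y - dn y = y + (up y - dn y) by lia.
  apply: op_up => //; lia.
- have -> : y + up y - dn y = y - (dn y - up y) by have := dn_le y; lia.
  apply: op_dn => //; lia.
Qed.

Lemma r_lt k : k < N -> r k < N.
Proof.
case E: (op k) => hk; first by apply: opN; apply: r_op.
by rewrite r_fix ?E.
Qed.

Lemma r_inv y : op y -> r (r y) = y.
Proof.
move=> hy. have hd := dn_le y.
case: (leqP (dn y) (up y)) => h.
- have e: r y = y + (up y - dn y) by rewrite /r hy; lia.
  have H := @r_refl y (up y - dn y) (fun u hu => op_up hy (leq_trans hu (leq_subr _ _))).
  rewrite e. lia.
- have e: r y = y - (dn y - up y) by rewrite /r hy; lia.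
  have H := @r_refl (y - (dn y - up y)) (dn y - up y).
  have ee : y - (dn y - up y) + (dn y - up y) = y by lia.
  rewrite ee in H.
  rewrite e H ?e; first lia.
  move=> u hu. have -> : y - (dn y - up y) + u = y - (dn y - up y - u) by lia.
  apply: op_dn => //; lia.
Qed.

Lemma r_lt_closer y z : op y -> ~~ op z -> y < z -> r y < z.
Proof.
move=> hy hz hyz.
have : y + up y < z.
  rewrite ltnNge; apply/negP => hle.
  have := @op_up y (z - y) hy ltac:(lia).
  have -> : y + (z - y) = z by lia.
  by rewrite (negbTE hz).
rewrite /r hy. lia.
Qed.

End Refl.

Lemma r_ext N op1 op2 : op1 =1 op2 -> forall k, r N op1 k = r N op2 k.
Proof.
move=> e k.
have hd : forall k, dn op1 k = dn op2 k by elim=> //= m ->; rewrite e.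
have hg : forall k, g N op1 k = g N op2 k by elim=> //= m ->; rewrite e.
by rewrite /r /up e hd hg.
Qed.
Section M.
Variable n : nat.
Implicit Types mu : matching_fun n.

Definition opm mu (k : nat) : bool :=
  [exists x : 'I_(2*n), (val x == k) && (val x < val (mu x))].

Lemma opm_lt mu k : opm mu k -> k < 2 * n.
Proof. move=> /existsP [x /andP [/eqP <- _]]; exact: ltn_ord. Qed.

Lemma opmE mu (x : 'I_(2*n)) : opm mu x = (x < mu x).
Proof.
apply/existsP/idP => [[y /andP[/eqP e h]]|h]; last by exists x; rewrite eqxx.
by have <- : y = x by apply: val_inj.
Qed.

Definition rr mu k := r (2*n) (opm mu) k.
Definition RR mu (x : 'I_(2*n)) : 'I_(2*n) := insubd x (rr mu x).

Lemma RR_val mu x : val (RR mu x) = rr mu x.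
Proof. by rewrite /RR val_insubd r_lt //; apply: opm_lt. Qed.

Definition Phi mu : matching_fun n := [ffun x => RR mu (mu (RR mu x))].

Variable mu : matching_fun n.
Hypothesis Hm : is_matching mu.

Lemma muK x : mu (mu x) = x.
Proof. by move/forallP: Hm => /(_ x) /andP[/eqP]. Qed.
Lemma mu_neq x : mu x != x.
Proof. by move/forallP: Hm => /(_ x) /andP[]. Qed.
Lemma mu_close (x : 'I_(2*n)) : ~~ (x < mu x) -> mu x < x.
Proof. have := mu_neq x. rewrite -val_eqE /=. lia. Qed.

Lemma rr_op k : opm mu k -> opm mu (rr mu k).
Proof. apply: r_op; apply: opm_lt. Qed.
Lemma rr_inv k : opm mu k -> rr mu (rr mu k) = k.
Proof. apply: r_inv; apply: opm_lt. Qed.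
Lemma rr_fix k : ~~ opm mu k -> rr mu k = k.
Proof. exact: r_fix. Qed.
Lemma rr_closer y z : opm mu y -> ~~ opm mu z -> y < z -> rr mu y < z.
Proof. apply: r_lt_closer; apply: opm_lt. Qed.

Lemma RRK x : RR mu (RR mu x) = x.
Proof.
apply: val_inj; rewrite !RR_val.
case E: (opm mu x); first by rewrite rr_inv.
by rewrite !rr_fix ?E.
Qed.

Lemma RR_fix (x : 'I_(2*n)) : ~~ (x < mu x) -> RR mu x = x.
Proof. by move=> h; apply: val_inj; rewrite RR_val rr_fix // opmE. Qed.

Lemma Phi_open (x : 'I_(2*n)) : x < mu x -> val (Phi mu x) = val (mu (RR mu x)) /\ x < Phi mu x.
Proof.
move=> hx. rewrite ffunE.
have ho : opm mu (RR mu x) by rewrite RR_val; apply: rr_op; rewrite opmE.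
have hz : ~~ (mu (RR mu x) < mu (mu (RR mu x))).
  rewrite muK; move: ho; rewrite opmE; lia.
rewrite RR_fix //; split => //.
have h1 : opm mu (rr mu x) by apply: rr_op; rewrite opmE.
have h2 : ~~ opm mu (mu (RR mu x)) by rewrite opmE.
have h3 : rr mu x < mu (RR mu x) by rewrite -RR_val -opmE.
have := rr_closer h1 h2 h3.
by rewrite rr_inv ?opmE.
Qed.

Lemma Phi_openE (x : 'I_(2*n)) : (x < Phi mu x) = (x < mu x).
Proof.
case hx: (x < mu x); first by case: (Phi_open (idP hx)) => _ ->.
have hc := mu_close (negbT hx).
rewrite ffunE (@RR_fix x) ?hx //.
apply/negbTE; rewrite -leqNgt. apply: ltnW.
rewrite RR_val. apply: rr_closer => //.
  by rewrite opmE muK.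
by rewrite opmE hx.
Qed.

Lemma opm_Phi : opm (Phi mu) =1 opm mu.
Proof.
move=> k; rewrite /opm; apply: eq_existsb => x.
by rewrite Phi_openE.
Qed.

Lemma RR_Phi x : RR (Phi mu) x = RR mu x.
Proof. apply: val_inj; rewrite !RR_val /rr; apply: r_ext; exact: opm_Phi. Qed.

Lemma Phi_matching : is_matching (Phi mu).
Proof.
apply/forallP => x; apply/andP; split.
  by rewrite !ffunE RRK muK RRK.
rewrite ffunE; apply/negP => /eqP e.
have := mu_neq (RR mu x). by rewrite -{2}e RRK eqxx.
Qed.

Lemma PhiK : Phi (Phi mu) = mu.
Proof. by apply/ffunP => x; rewrite ffunE !RR_Phi ffunE !RRK. Qed.

End M.
Section C.
Variable n : nat.
Implicit Types mu : matching_fun n.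

Definition pm mu (a b : nat) : Prop := exists x : 'I_(2*n), val x = a /\ val (mu x) = b.

Lemma arcE mu a b : Defs.arc mu a.+1 b.+1 <-> [/\ a < b, b < 2 * n & pm mu a b].
Proof.
rewrite /arc; split.
  case/and4P => _ h1 h2 /existsP [x /andP [/eqP e1 /eqP e2]].
  by split => //; exists x.
case=> h1 h2 [x [e1 e2]]; apply/and4P; split => //.
by apply/existsP; exists x; rewrite e1 e2 !eqxx.
Qed.

Lemma containsE p (pi : pattern p) mu i j :
  contains_at pi mu i j <->
  (i + p <= j /\ forall s : 'I_p,
     [/\ i + s < j + (pi^-1)%g s, j + (pi^-1)%g s < 2 * n & pm mu (i + s) (j + (pi^-1)%g s)]).
Proof.
rewrite /contains_at; split.
  case/andP => h /forallP H; split => // s.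
  by move: (H s); rewrite !addnS => /arcE.
case=> h H; apply/andP; split => //; apply/forallP => s.
by rewrite !addnS; apply/arcE.
Qed.

Lemma pm_open mu a b : pm mu a b -> opm mu a -> a < b.
Proof. by case=> x [<- <-]; rewrite opmE. Qed.

Lemma pm_close mu a b : is_matching mu -> pm mu a b -> a < b -> ~~ opm mu b.
Proof.
move=> Hm [x [<- <-]] h; rewrite opmE muK // -leqNgt; exact: ltnW.
Qed.

Variable p : nat.
Variables pi rho : pattern p.
Hypothesis hp : 0 < p.
Hypothesis hrho : forall s : 'I_p, val ((rho^-1)%g s) = val ((pi^-1)%g (rev_ord s)).
Variable mu : matching_fun n.
Hypothesis Hm : is_matching mu.

Lemma occ_facts i j : contains_at pi (Phi mu) i j ->
  [/\ contains_at rho mu (rr mu (i + p.-1)) j, opm mu (i + p.-1) & i + p.-1 < 2 * n].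
Proof.
move/containsE => [hij H].
have op1 : forall u, u < p -> opm mu (i + u).
  move=> u hu. have [h1 h2 [x [e1 e2]]] := H (Ordinal hu).
  have hx : val x < val (Phi mu x) by rewrite e1 e2.
  rewrite -e1 opmE -(Phi_openE Hm); exact: hx.
have pm2 : forall s : 'I_p, pm mu (rr mu (i + s)) (j + (pi^-1)%g s).
  move=> s. have [h1 h2 [x [e1 e2]]] := H s.
  have hx : x < mu x by rewrite -(Phi_openE Hm) e1 e2.
  exists (RR mu x); split; first by rewrite RR_val e1.
  by have [<- _] := Phi_open Hm hx.
have st3 : forall s : 'I_p, rr mu (i + rev_ord s) = rr mu (i + p.-1) + s.
  move=> s. rewrite /rr (@r_refl _ _ (@opm_lt n mu) (i + rev_ord s) s).
    by have -> : i + rev_ord s + s = i + p.-1 by rewrite /=; have := ltn_ord s; lia.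
  move=> u hu. have -> : i + rev_ord s + u = i + (p - s.+1 + u) by rewrite /=; lia.
  apply: op1; have := ltn_ord s; lia.
have hj : ~~ opm mu j.
  have [h1 h2 h3] := H (pi (Ordinal hp)).
  rewrite permK /= addn0 in h1 h2 h3.
  rewrite -(opm_Phi Hm); exact: pm_close (Phi_matching Hm) h3 h1.
have op0 : opm mu i by have := op1 0 hp; rewrite addn0.
have opl : opm mu (i + p.-1) by apply: op1; lia.
split => //; last exact: opm_lt opl.
apply/containsE; split.
  have := st3 (Ordinal (ltac:(lia) : p.-1 < p)).
  rewrite /= (_ : p - p.-1.+1 = 0); last lia.
  rewrite addn0 => e.
  have := rr_closer op0 hj ltac:(lia). lia.
move=> s. have -> : (rho^-1)%g s = (pi^-1)%g (rev_ord s) :> nat by exact: hrho.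
rewrite -st3. have [h1 h2 _] := H (rev_ord s). have h3 := pm2 (rev_ord s).
split => //. have h4 := rr_op (op1 _ (ltn_ord (rev_ord s))). exact: (pm_open h3 h4).
Qed.

Lemma occ_le : occ pi (Phi mu) <= occ rho mu.
Proof.
rewrite /occ.
set f := fun ij : 'I_(2 * n).+1 * 'I_(2 * n).+1 =>
   (insubd ij.1 (rr mu (ij.1 + p.-1)), ij.2).
rewrite -(card_in_imset (f := f)).
  apply: subset_leq_card; apply/subsetP => _ /imsetP [[i j] hij ->].
  rewrite inE /= in hij; have [h1 h2 h3] := occ_facts hij.
  rewrite inE /= val_insubd; case: ifP => // /negP; case.
  have := r_lt (@opm_lt n mu) h3. rewrite /rr. lia.
move=> [i1 j1] [i2 j2]; rewrite !inE /= => H1 H2 [e1 e2].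
have [_ o1 l1] := occ_facts H1. have [_ o2 l2] := occ_facts H2.
move/(congr1 val): e1; rewrite /= !val_insubd.
have := r_lt (@opm_lt n mu) l1. have := r_lt (@opm_lt n mu) l2. rewrite /rr.
case: ifP; last lia. case: ifP; last lia.
move=> _ _ _ _ e.
have : rr mu (rr mu (i1 + p.-1)) = rr mu (rr mu (i2 + p.-1)) by rewrite /rr e.
rewrite !rr_inv // => e'.
congr pair; [apply: val_inj => /=; lia | exact: e2].
Qed.
End C.
Lemma decV p (s : 'I_p) : ((dec_pat p)^-1)%g s = rev_ord s.
Proof.
apply: (@perm_inj _ (dec_pat p)). rewrite permKV /dec_pat permE.
by rewrite rev_ordK.
Qed.

Lemma incV p (s : 'I_p) : ((inc_pat p)^-1)%g s = s.
Proof. by rewrite /inc_pat invg1 perm1. Qed.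

Lemma occ_swap p n (mu : matching_fun n) : 0 < p -> is_matching mu ->
  occ (inc_pat p) (Phi mu) = occ (dec_pat p) mu /\
  occ (dec_pat p) (Phi mu) = occ (inc_pat p) mu.
Proof.
move=> hp Hm.
have h1 : forall s : 'I_p, val (((dec_pat p)^-1)%g s) = val (((inc_pat p)^-1)%g (rev_ord s)).
  by move=> s; rewrite decV incV.
have h2 : forall s : 'I_p, val (((inc_pat p)^-1)%g s) = val (((dec_pat p)^-1)%g (rev_ord s)).
  by move=> s; rewrite decV incV rev_ordK.
have HP := Phi_matching Hm.
have a1 := occ_le hp h1 Hm.
have a2 := occ_le hp h2 HP. rewrite PhiK // in a2.
have a3 := occ_le hp h2 Hm.
have a4 := occ_le hp h1 HP. rewrite PhiK // in a4.
split; apply/eqP; rewrite eqn_leq; apply/andP; split => //.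
Qed.

Definition Phi' n (mu : matching_fun n) := if is_matching mu then Phi mu else mu.

Lemma Phi'K n : involutive (@Phi' n).
Proof.
move=> mu; rewrite /Phi'. case E: (is_matching mu); last by rewrite E.
by rewrite Phi_matching ?PhiK.
Qed.

Lemma a_le p n k m : 0 < p ->
  a_count n k m (inc_pat p) (dec_pat p) <= a_count n k m (dec_pat p) (inc_pat p).
Proof.
move=> hp. rewrite /a_count -(card_imset _ (inv_inj (@Phi'K n))).
apply: subset_leq_card; apply/subsetP => nu /imsetP [mu].
rewrite !inE => /and3P [Hm /eqP hk /eqP hm] ->.
rewrite /Phi' Hm Phi_matching //=.
by have [-> ->] := occ_swap hp Hm; rewrite hk hm !eqxx.
Qed.

Lemma a_ge p n k m : 0 < p ->
  a_count n k m (dec_pat p) (inc_pat p) <= a_count n k m (inc_pat p) (dec_pat p).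
Proof.
move=> hp. rewrite /a_count -(card_imset _ (inv_inj (@Phi'K n))).
apply: subset_leq_card; apply/subsetP => nu /imsetP [mu].
rewrite !inE => /and3P [Hm /eqP hk /eqP hm] ->.
rewrite /Phi' Hm Phi_matching //=.
by have [-> ->] := occ_swap hp Hm; rewrite hk hm !eqxx.
Qed.

Lemma a_swap p n k m (pi tau : pattern p) : a_count n k m pi tau = a_count n m k tau pi.
Proof.
rewrite /a_count; apply: eq_card => mu; rewrite !inE.
by case: (is_matching mu) (occ pi mu == k) (occ tau mu == m) => [] [] [].
Qed.

Theorem corollary1 :
  (forall p : nat, 1 <= p ->
     forall n k m : nat,
       a_count n k m (inc_pat p) (dec_pat p) = a_count n k m (dec_pat p) (inc_pat p))
  /\
  (forall n k m : nat,
     (* k occurrences of 21 and m of 12  =  m occurrences of 21 and k of 12 *)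
     a_count n k m (dec_pat 2) (inc_pat 2) = a_count n m k (dec_pat 2) (inc_pat 2)).
Proof.
have P1 : forall p : nat, 1 <= p -> forall n k m : nat,
       a_count n k m (inc_pat p) (dec_pat p) = a_count n k m (dec_pat p) (inc_pat p).
  move=> p hp n k m; apply/eqP; rewrite eqn_leq a_le ?a_ge //.
split => // n k m.
by rewrite -P1 // a_swap.
Qed.
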